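(* Let $k$ be a field of characteristic $0$, $R=k[x_1,\dots,x_n]$, $\ell=x_1+\dots+x_n$, let $d$ be a positive integer with $d\le n$, let $J=(x_1^2,\dots,x_n^2)$ and $G=J\colon(\ell^d)$ (equivalently, $G$ is the annihilator ideal of $e_{n-d}(X_1,\dots,X_n)$). Then $$G=J+\Big(\prod_{i=1}^{(n-d+1)/2}(x_{2i-1}-x_{2i})\Big)_{S_n}\quad\text{if } n+d \text{ is odd},$$ $$G=J+\Big(x_{n-d+1}\prod_{i=1}^{(n-d)/2}(x_{2i-1}-x_{2i})\Big)_{S_n}\quad\text{if } n+d \text{ is even}.$$ (That is, the products $(x_1-x_2)(x_3-x_4)\cdots(x_{n-d}-x_{n-d+1})$, respectively $(x_1-x_2)\cdots(x_{n-d-1}-x_{n-d})x_{n-d+1}$.)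
   Context: The symmetric group $S_n$ acts on $R$ by permuting the variables, and for $f\in R$, $(f)_{S_n}$ denotes the ideal generated by $\{\sigma(f)\mid\sigma\in S_n\}$. $R$ acts on $S=k[X_1,\dots,X_n]$ by $x_i\circ F=\partial F/\partial X_i$, and the annihilator ideal of $F\in S$ is $\{f\in R\mid f\circ F=0\}$; $e_m$ denotes the $m$-th elementary symmetric polynomial. An empty product equals $1$. *)

(* Defs.v *)
From HB Require Import structures.
From mathcomp Require Import all_boot all_order all_algebra all_fingroup.
From mathcomp Require Import mpoly.
Set Implicit Arguments. Unset Strict Implicit. Unset Printing Implicit Defensive.
Import GRing.Theory.
Local Open Scope ring_scope.

Section Defs.
Variables (k : fieldType) (n : nat).

Definition gen_ideal (S : {mpoly k[n]} -> Prop) (f : {mpoly k[n]}) : Prop :=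
  exists (m : nat) (c g : 'I_m -> {mpoly k[n]}),
    (forall i, S (g i)) /\ f = \sum_(i < m) c i * g i.

(* The variable x_{j+1} (0-based index j); junk value 0 if j >= n (never used
   out of range in the theorem). *)
Definition var (j : nat) : {mpoly k[n]} :=
  if (insub j : option 'I_n) is Some i then 'X_i else 0.

Definition ell : {mpoly k[n]} := \sum_(i < n) 'X_i.

Definition J_gens (g : {mpoly k[n]}) : Prop := exists i : 'I_n, g = 'X_i ^+ 2.
Definition J : {mpoly k[n]} -> Prop := gen_ideal J_gens.

Definition colon (I : {mpoly k[n]} -> Prop) (h : {mpoly k[n]}) (f : {mpoly k[n]}) : Prop :=
  I (f * h).

Definition J_plus_sym (f : {mpoly k[n]}) : {mpoly k[n]} -> Prop :=
  gen_ideal (fun g => J_gens g \/ exists s : 'S_n, g = msym s f).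

Definition pair_prod (m : nat) : {mpoly k[n]} :=
  \prod_(i < m) (var (2 * i) - var (2 * i + 1)).

End Defs.

(* Main.v *)
Require Import Defs.
From HB Require Import structures.
From mathcomp Require Import all_boot all_order all_algebra all_fingroup.
From mathcomp Require Import mpoly.
From mathcomp Require Import ring zify.
Import GRing.Theory.
Local Open Scope ring_scope.
Set Implicit Arguments. Unset Strict Implicit. Unset Printing Implicit Defensive.

Section Work.
Variables (k : fieldType) (n : nat).
Local Notation P := {mpoly k[n.+1]}.

Definition ideal_like (I : P -> Prop) :=
  [/\ I 0, (forall p q, I p -> I q -> I (p + q)) & (forall r p, I p -> I (r * p))].

Lemma gi0 S : @gen_ideal k n.+1 S 0.
Proof.
exists 0%N, (fun _ => 0), (fun _ => 0); split; first by case.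
by rewrite big_ord0.
Qed.

Lemma giS (S : P -> Prop) g : S g -> gen_ideal S g.
Proof.
move=> Sg; exists 1%N, (fun _ => 1), (fun _ => g); split => //.
by rewrite big_ord1 mul1r.
Qed.

Lemma giD S p q : @gen_ideal k n.+1 S p -> gen_ideal S q -> gen_ideal S (p + q).
Proof.
move=> [m1 [c1 [g1 [S1 ->]]]] [m2 [c2 [g2 [S2 ->]]]].
exists (m1 + m2)%N, (fun i => match split i with inl j => c1 j | inr j => c2 j end),
  (fun i => match split i with inl j => g1 j | inr j => g2 j end); split.
  by move=> i; case: (split i).
rewrite big_split_ord /=; congr (_ + _); apply: eq_bigr => i _.
  by move: (unsplitK (@inl _ 'I_m2 i)) => /= ->.
by move: (unsplitK (@inr 'I_m1 _ i)) => /= ->.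
Qed.

Lemma giM S r p : @gen_ideal k n.+1 S p -> gen_ideal S (r * p).
Proof.
move=> [m [c [g [Sg ->]]]]; exists m, (fun i => r * c i), g; split => //.
by rewrite mulr_sumr; apply: eq_bigr => i _; rewrite mulrA.
Qed.

Lemma gi_ideal S : ideal_like (@gen_ideal k n.+1 S).
Proof. split; [exact: gi0 | exact: giD | exact: giM]. Qed.

Lemma il_sum (I : P -> Prop) m (F : 'I_m -> P) : ideal_like I -> (forall i, I (F i)) -> I (\sum_(i < m) F i).
Proof.
case=> I0 ID IM HF; elim/big_ind: _ => //.
Qed.

Lemma gi_min S (I : P -> Prop) : ideal_like I -> (forall g, S g -> I g) ->
  forall f, gen_ideal S f -> I f.
Proof.
move=> Il HS f [m [c [g [Sg ->]]]]; apply: il_sum => // i.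
case: Il => _ _ IM; apply: IM; exact: HS.
Qed.

Lemma gi_mono (S S' : P -> Prop) : (forall g, S g -> S' g) ->
  forall f, gen_ideal S f -> gen_ideal S' f.
Proof. by move=> H; apply: gi_min; [exact: gi_ideal| move=> g /H; exact: giS]. Qed.

Lemma il_neg (I : P -> Prop) p : ideal_like I -> I p -> I (- p).
Proof. by case=> _ _ IM Ip; rewrite -mulN1r; apply: IM. Qed.

Lemma il_sub (I : P -> Prop) p q : ideal_like I -> I p -> I q -> I (p - q).
Proof. move=> Il Ip Iq; case: (Il) => _ ID _; apply: ID => //; exact: il_neg. Qed.

Lemma il_mulr (I : P -> Prop) p r : ideal_like I -> I p -> I (p * r).
Proof. by case=> _ _ IM Ip; rewrite mulrC; apply: IM. Qed.

Lemma mpoly_ind_ring (Q : P -> Prop) :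
  (forall c, Q c%:MP) -> (forall i, Q 'X_i) ->
  (forall p q, Q p -> Q q -> Q (p + q)) -> (forall p q, Q p -> Q q -> Q (p * q)) ->
  forall p, Q p.
Proof.
move=> QC QX QD QM p0; elim/mpolyind: p0 => [|c m p _ _ Qp]; first by rewrite -mpolyC0.
apply: (QD) => //; rewrite -mul_mpolyC; apply: (QM) => //.
rewrite mpolyXE_id; apply: big_ind; [by rewrite -mpolyC1 | exact: QM | ].
move=> i ?; move: (m i) => e; elim: e => [|e IH]; first by rewrite expr0 -mpolyC1.
by rewrite exprS; apply: (QM).
Qed.


Local Notation Jn := (@J k n.+1).

Lemma J_ideal : ideal_like Jn.
Proof. exact: gi_ideal. Qed.

Lemma JX2 (i : 'I_n.+1) : Jn ('X_i ^+ 2).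
Proof. by apply: giS; exists i. Qed.

Lemma J0 : Jn 0. Proof. by case: J_ideal. Qed.
Lemma JD p q : Jn p -> Jn q -> Jn (p + q). Proof. by case: J_ideal => _ H _; apply: H. Qed.
Lemma JM r p : Jn p -> Jn (r * p). Proof. by case: J_ideal => _ _ H; apply: H. Qed.
Lemma JMr r p : Jn p -> Jn (p * r). Proof. by move=> H; rewrite mulrC; apply: JM. Qed.
Lemma JB p q : Jn p -> Jn q -> Jn (p - q). Proof. by apply: il_sub; exact: J_ideal. Qed.
Lemma JN p : Jn p -> Jn (- p). Proof. by apply: il_neg; exact: J_ideal. Qed.

Lemma J_map (F : P -> P) : F 0 = 0 -> {morph F : x y / x + y} -> {morph F : x y / x * y} ->
  (forall i : 'I_n.+1, Jn (F ('X_i ^+ 2))) -> forall f, Jn f -> Jn (F f).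
Proof.
move=> F0 FD FM FX; apply: gi_min.
  split; first by rewrite F0; exact: J0.
    by move=> p q Hp Hq; rewrite FD; apply: JD.
  by move=> r p Hp; rewrite FM; apply: JM.
by move=> g [i ->].
Qed.

Definition zx (x : 'I_n.+1) (p : P) : P :=
  p \mPo [tuple (if i == x then 0 else 'X_i) | i < n.+1].

Lemma zxD x : {morph zx x : p q / p + q}.
Proof. by move=> p q; rewrite /zx comp_mpolyD. Qed.
Lemma zxM x : {morph zx x : p q / p * q}.
Proof. by move=> p q; rewrite /zx rmorphM. Qed.
Lemma zxC x c : zx x c%:MP = c%:MP.
Proof. by rewrite /zx comp_mpolyC. Qed.
Lemma zx0 x : zx x 0 = 0.
Proof. by rewrite -mpolyC0 zxC. Qed.
Lemma zx1 x : zx x 1 = 1.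
Proof. by rewrite -mpolyC1 zxC. Qed.
Lemma zxN x p : zx x (- p) = - zx x p.
Proof. by rewrite /zx comp_mpolyN. Qed.
Lemma zxB x p q : zx x (p - q) = zx x p - zx x q.
Proof. by rewrite /zx comp_mpolyB. Qed.
Lemma zxX x i : zx x 'X_i = if i == x then 0 else 'X_i.
Proof. by rewrite /zx comp_mpolyXU -tnth_nth tnth_mktuple. Qed.
Lemma zxXn x p e : zx x (p ^+ e) = zx x p ^+ e.
Proof. by elim: e => [|e IH]; rewrite ?expr0 ?zx1 // !exprS zxM IH. Qed.
Lemma zx_sum x m (F : 'I_m -> P) : zx x (\sum_(i < m) F i) = \sum_(i < m) zx x (F i).
Proof. by rewrite /zx raddf_sum. Qed.

Lemma J_zx x f : Jn f -> Jn (zx x f).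
Proof.
apply: J_map; [exact: zx0 | exact: zxD | exact: zxM |].
move=> i; rewrite zxXn zxX; case: eqP => _; last exact: JX2.
by rewrite expr0n; exact: J0.
Qed.

Lemma zxK x p : zx x (zx x p) = zx x p.
Proof.
elim/mpoly_ind_ring: p => [c|i|p q Hp Hq|p q Hp Hq].
- by rewrite !zxC.
- by rewrite zxX; case: eqP => [_|/eqP ne]; rewrite ?zx0 // zxX (negPf ne).
- by rewrite !zxD Hp Hq.
- by rewrite !zxM Hp Hq.
Qed.

Lemma zxXx x : zx x 'X_x = 0.
Proof. by rewrite zxX eqxx. Qed.

Definition dx (x : 'I_n.+1) (p : P) : P := mderiv x p.

Lemma dxD x : {morph dx x : p q / p + q}.
Proof. by move=> p q; rewrite /dx mderivD. Qed.
Lemma dxM x p q : dx x (p * q) = dx x p * q + p * dx x q.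
Proof. by rewrite /dx mderivM. Qed.
Lemma dxC x c : dx x c%:MP = 0.
Proof. by rewrite /dx mderivC. Qed.
Lemma dxX x i : dx x 'X_i = if i == x then 1 else 0.
Proof.
rewrite /dx mderivX mnm1E; case: eqP => [->|_]; last by rewrite scale0r.
have -> : (U_(x) - U_(x))%MM = 0%MM by apply/mnmP => j; rewrite mnmBE mnm0E subnn.
by rewrite mpolyX0 scale1r.
Qed.
Lemma dx_sum x m (F : 'I_m -> P) : dx x (\sum_(i < m) F i) = \sum_(i < m) dx x (F i).
Proof. by rewrite /dx raddf_sum. Qed.

Lemma zx_dx_zx x p : dx x (zx x p) = 0.
Proof.
elim/mpoly_ind_ring: p => [c|i|p q Hp Hq|p q Hp Hq].
- by rewrite zxC dxC.
- rewrite zxX; case: eqP => [_|/eqP ne]; first by rewrite -mpolyC0 dxC.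
  by rewrite dxX (negPf ne).
- by rewrite zxD dxD Hp Hq addr0.
- by rewrite zxM dxM Hp Hq mul0r mulr0 addr0.
Qed.

Lemma J_zxdx x f : Jn f -> Jn (zx x (dx x f)).
Proof.
move=> [m [c [g [Sg ->]]]]; rewrite dx_sum zx_sum; apply: il_sum; first exact: J_ideal.
move=> i; case: (Sg i) => j ->; rewrite dxM zxD.
apply: JD.
  rewrite zxM zxXn; apply: JM; rewrite zxX; case: eqP => _;
  [rewrite expr0n; exact: J0 | exact: JX2].
rewrite expr2 dxM zxM zxD !zxM zxX dxX; case: eqP => _.
  by rewrite !(mulr0, mul0r, addr0, zx0); exact: J0.
by rewrite !(mulr0, mul0r, addr0, zx0); exact: J0.
Qed.

Lemma decomp x f : Jn (f - (zx x f + 'X_x * zx x (dx x f))).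
Proof.
elim/mpoly_ind_ring: f => [c|i|p q Hp Hq|p q Hp Hq].
- by rewrite zxC dxC -mpolyC0 zxC mulr0 addr0 subrr; exact: J0.
- rewrite zxX dxX; case: eqP => [->|_].
    by rewrite zx1 mulr1 add0r subrr; exact: J0.
  by rewrite -mpolyC0 zxC mulr0 addr0 subrr; exact: J0.
- rewrite zxD dxD zxD.
  have -> : p + q - (zx x p + zx x q + 'X_x * (zx x (dx x p) + zx x (dx x q))) =
    (p - (zx x p + 'X_x * zx x (dx x p))) + (q - (zx x q + 'X_x * zx x (dx x q))) by ring.
  exact: JD.
- rewrite zxM dxM zxD !zxM.
  set a := zx x p; set b := zx x (dx x p); set a' := zx x q; set b' := zx x (dx x q).
  have -> : p * q - (a * a' + 'X_x * (b * a' + a * b')) =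
     (p - (a + 'X_x * b)) * q + (a + 'X_x * b) * (q - (a' + 'X_x * b')) + 'X_x ^+ 2 * (b * b') by ring.
  apply: JD; [apply: JD; [exact: JMr | exact: JM] | apply: JMr; exact: JX2].
Qed.


Lemma split_J x p q : zx x p = p -> zx x q = q -> Jn (p + 'X_x * q) -> Jn p /\ Jn q.
Proof.
move=> fp fq H; split.
  by move: (J_zx x H); rewrite zxD zxM zxXx mul0r addr0 fp.
move: (J_zxdx x H); rewrite dxD dxM dxX eqxx zxD zxD !zxM zxXx mul0r addr0.
by rewrite -{1}fp zx_dx_zx zx0 add0r zx1 mul1r fq.
Qed.

Notation var := (@var k n.+1).

Lemma var_val (i : 'I_n.+1) : var i = 'X_i.
Proof. by rewrite /Defs.var valK. Qed.

Lemma var_lt j : (j < n.+1)%N -> var j = 'X_(inord j).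
Proof. by move=> lt; rewrite -var_val inordK. Qed.

Lemma var_ge j : (n.+1 <= j)%N -> var j = 0.
Proof. by move=> le; rewrite /Defs.var insubF // ltnNge le. Qed.

Lemma msymXU (s : 'S_n.+1) i : msym s 'X_i = 'X_(s i) :> P.
Proof.
rewrite msymX; congr 'X_[_]; apply/mnmP => j; rewrite mnmE !mnm1E.
by rewrite -(inj_eq (@perm_inj _ s)) permKV.
Qed.

Definition sv (s : 'S_n.+1) (j : nat) : nat := if (j < n.+1)%N then val (s (inord j)) else j.

Lemma msym_var s j : msym s (var j) = var (sv s j).
Proof.
rewrite /sv; case: ltnP => [lt|ge]; last by rewrite var_ge // msym0.
by rewrite var_lt // msymXU var_val.
Qed.

Definition tp (a b : nat) : 'S_n.+1 := tperm (inord a) (inord b).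

Lemma sv_tp a b j : (a < n.+1)%N -> (b < n.+1)%N ->
  sv (tp a b) j = if j == a then b else if j == b then a else j.
Proof.
move=> la lb; rewrite /sv /tp; case: ltnP => [lj|gj]; last first.
  by rewrite (gtn_eqF (leq_trans la gj)) (gtn_eqF (leq_trans lb gj)).
have inj : forall u v, (u < n.+1)%N -> (v < n.+1)%N -> (inord u == inord v :> 'I_n.+1) = (u == v).
  by move=> u v lu lv; apply/eqP/eqP => [E|->//]; rewrite -(inordK lu) -(inordK lv) E.
case: (eqVneq j a) => [->|ja]; first by rewrite tpermL; exact: inordK.
case: (eqVneq j b) => [->|jb]; first by rewrite tpermR; exact: inordK.
rewrite tpermD ?inj // 1?eq_sym //; exact: inordK.
Qed.

Definition fixes (m : nat) (s : 'S_n.+1) := forall i : 'I_n.+1, (m <= i)%N -> s i = i.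

Lemma fixes_lt m s i : fixes m s -> (s i < m)%N = (i < m)%N.
Proof.
move=> fs; case: (ltnP i m) => lim; last by rewrite fs // ltnNge lim.
apply/negPn/negP; rewrite -leqNgt => H.
have E := fs _ H; move/perm_inj: E => E.
by move: H; rewrite E leqNgt lim.
Qed.

Lemma fixes_tp m a b : (a < m)%N -> (b < m)%N -> (m <= n.+1)%N -> fixes m (tp a b).
Proof.
move=> la lb lm i li; rewrite /tp tpermD //.
  apply/eqP => E; move: li; rewrite -E inordK ?(leq_trans la lm) //.
  by rewrite leqNgt la.
apply/eqP => E; move: li; rewrite -E inordK ?(leq_trans lb lm) //.
by rewrite leqNgt lb.
Qed.

Lemma fixesM m s t : fixes m s -> fixes m t -> fixes m (s * t)%g.
Proof. by move=> fs ft i li; rewrite permM fs // ft. Qed.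

Lemma fixes_le m m' s : (m <= m')%N -> fixes m s -> fixes m' s.
Proof. by move=> le fs i li; rewrite fs // (leq_trans le li). Qed.

Definition in_orb m (g h : P) := exists s, fixes m s /\ h = msym s g.

Lemma orb_refl m g : in_orb m g g.
Proof. by exists 1%g; split; [move=> i _; rewrite perm1 | rewrite msym1m]. Qed.

Lemma orb_step m g h t : in_orb m g h -> fixes m t -> in_orb m g (msym t h).
Proof.
by move=> [s [fs ->]] ft; exists (s * t)%g; split; [exact: fixesM | rewrite msymMm].
Qed.

Notation pp := (@pair_prod k n.+1).

Lemma msym_pp s p : (forall j, (j < 2 * p)%N -> sv s j = j) -> msym s (pp p) = pp p.
Proof.
move=> H; rewrite /pair_prod (big_morph (msym s) (@msymM _ _ s) (msym1 _ s)); apply: eq_bigr => i _.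
rewrite msymB !msym_var !H //; have := ltn_ord i; lia.
Qed.


Definition eqJ (p q : P) := Jn (p - q).

Lemma eqJ_refl p : eqJ p p. Proof. by rewrite /eqJ subrr; exact: J0. Qed.
Lemma eqJ_sym p q : eqJ p q -> eqJ q p.
Proof. by rewrite /eqJ => H; rewrite -opprB; exact: JN. Qed.
Lemma eqJ_trans p q r : eqJ p q -> eqJ q r -> eqJ p r.
Proof.
rewrite /eqJ => H1 H2; have -> : p - r = (p - q) + (q - r) by ring.
exact: JD.
Qed.
Lemma eqJD p q p' q' : eqJ p p' -> eqJ q q' -> eqJ (p + q) (p' + q').
Proof.
rewrite /eqJ => H1 H2; have -> : p + q - (p' + q') = (p - p') + (q - q') by ring.
exact: JD.
Qed.
Lemma eqJM r p q : eqJ p q -> eqJ (r * p) (r * q).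
Proof. by rewrite /eqJ => H; rewrite -mulrBr; exact: JM. Qed.
Lemma eqJ_J p q : eqJ p q -> Jn q -> Jn p.
Proof.
rewrite /eqJ => H1 H2; have -> : p = (p - q) + q by ring.
exact: JD.
Qed.
Lemma J_eqJ p : Jn p -> eqJ p 0.
Proof. by rewrite /eqJ subr0. Qed.

Lemma Jvar2 j : Jn (var j ^+ 2).
Proof.
case: (ltnP j n.+1) => lj; first by rewrite var_lt //; exact: JX2.
by rewrite var_ge // expr0n; exact: J0.
Qed.

Lemma expand (y z : P) d : exists R, (y + z) ^+ d.+1 = y ^+ d.+1 + z * y ^+ d *+ d.+1 + z ^+ 2 * R.
Proof.
elim: d => [|d [R IH]]; first by exists 0; ring.
exists (y * R + y ^+ d *+ d.+1 + z * R).
rewrite exprS IH !exprS !mulrS; ring.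
Qed.

Definition L (s : seq nat) : P := \sum_(j <- s) var j.

Lemma L_cons j s : L (j :: s) = var j + L s.
Proof. by rewrite /L big_cons. Qed.

Lemma Lpow s e : (size s < e)%N -> Jn (L s ^+ e).
Proof.
elim: s e => [|j s IH] e /= lt.
  by rewrite /L big_nil expr0n; case: e lt => // e _; exact: J0.
case: e lt => // e lt; rewrite L_cons addrC.
case: e lt => // e lt.
have [R ->] := expand (L s) (var j) e.+1.
apply: JD; first apply: JD.
- by rewrite exprS; apply: JM; apply: IH.
- by rewrite -mulr_natr; apply: JMr; apply: JM; apply: IH.
- by apply: JMr; exact: Jvar2.
Qed.

Lemma eqJ_pow u l l' d : eqJ (u * l) (u * l') -> eqJ (u * l ^+ d) (u * l' ^+ d).
Proof.
move=> H; elim: d => [|d IH]; first exact: eqJ_refl.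
rewrite !exprS.
have -> : u * (l * l ^+ d) = l * (u * l ^+ d) by ring.
apply: (eqJ_trans (eqJM l IH)).
have -> : l * (u * l' ^+ d) = l' ^+ d * (u * l) by ring.
have -> : u * (l' * l' ^+ d) = l' ^+ d * (u * l') by ring.
exact: eqJM.
Qed.

Lemma pp_red p m : (2 * p <= m)%N ->
  eqJ (pp p * L (iota 0 m)) (pp p * L (iota (2 * p) (m - 2 * p))).
Proof.
elim: p => [|p IH] le; first by rewrite muln0 subn0; exact: eqJ_refl.
have le' : (2 * p <= m)%N by lia.
rewrite /pair_prod big_ord_recr /= -/(pp p).
set u := var (2 * p) - var (2 * p + 1).
have -> : pp p * u * L (iota 0 m) = u * (pp p * L (iota 0 m)) by ring.
apply: (eqJ_trans (eqJM u (IH le'))).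
have -> : iota (2 * p) (m - 2 * p) = (2 * p)%N :: (2 * p + 1)%N :: iota (2 * p.+1) (m - 2 * p.+1).
  have -> : (m - 2 * p = (m - 2 * p.+1).+2)%N by lia.
  by rewrite /= mulnS add2n addn1.
rewrite !L_cons /eqJ.
have -> : u * (pp p * (var (2 * p) + (var (2 * p + 1) + L (iota (2 * p.+1) (m - 2 * p.+1))))) -
   pp p * u * L (iota (2 * p.+1) (m - 2 * p.+1)) = pp p * (var (2 * p) ^+ 2 - var (2 * p + 1) ^+ 2) by rewrite /u; ring.
by apply: JM; apply: JB; exact: Jvar2.
Qed.

Definition ellm m := L (iota 0 m).

Definition gen m d : P := if odd (m + d) then pp ((m - d + 1) %/ 2)
        else var (m - d) * pp ((m - d) %/ 2).

Lemma gen_ann m d : (0 < d)%N -> (d <= m)%N -> Jn (ellm m ^+ d * gen m d).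
Proof.
move=> d0 dm; rewrite mulrC /gen; case: ifP => Hodd.
  have hm : ((m + d) %% 2 = 1)%N by rewrite modn2 Hodd.
  set p := ((m - d + 1) %/ 2)%N.
  have hp : (2 * p = m - d + 1)%N by rewrite /p; lia.
  have H := pp_red (m := m) (p := p) ltac:(lia).
  apply: (eqJ_J (eqJ_pow d H)); apply: JM; apply: Lpow; rewrite size_iota; lia.
have hm : ((m + d) %% 2 = 0)%N by rewrite modn2 Hodd.
set p := ((m - d) %/ 2)%N.
have hp : (2 * p = m - d)%N by rewrite /p; lia.
set w := (m - d)%N.
have H : eqJ (var w * pp p * ellm m) (var w * pp p * L (iota w.+1 (d.-1))).
  have H1 := eqJM (var w) (pp_red (m := m) (p := p) ltac:(lia)).
  rewrite -!mulrA; apply: (eqJ_trans H1).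
  have -> : iota (2 * p) (m - 2 * p) = w :: iota w.+1 d.-1.
    by rewrite hp -/w; have -> : (m - w = d.-1.+1)%N by lia.
  rewrite L_cons /eqJ.
  have -> : var w * (pp p * (var w + L (iota w.+1 d.-1))) - var w * (pp p * L (iota w.+1 d.-1)) =
    pp p * var w ^+ 2 by ring.
  by apply: JM; exact: Jvar2.
apply: (eqJ_J (eqJ_pow d H)); apply: JM; apply: Lpow; rewrite size_iota; lia.
Qed.


Lemma J_msym s f : Jn f -> Jn (msym s f).
Proof.
apply: J_map; [exact: msym0 | exact: msymD | exact: msymM |].
by move=> i; rewrite msymM msymXU -expr2; exact: JX2.
Qed.

Lemma ellmE m : (m <= n.+1)%N -> ellm m = \sum_(i < n.+1 | (i < m)%N) 'X_i.
Proof.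
move=> le; rewrite /ellm /L.
have -> : iota 0 m = index_iota 0 m by rewrite /index_iota subn0.
rewrite big_mkord (big_ord_widen _ (fun j => var j) le).
by apply: eq_bigr => i _; rewrite var_val.
Qed.

Lemma msym_ellm m s : (m <= n.+1)%N -> fixes m s -> msym s (ellm m) = ellm m.
Proof.
move=> le fs; rewrite ellmE // (big_morph (msym s) (@msymD _ _ s) (msym0 _ s)).
under eq_bigr do rewrite msymXU.
rewrite [RHS](reindex_inj (@perm_inj _ s)) /=.
by apply: eq_bigl => i; rewrite fixes_lt.
Qed.

Lemma msymXn s p e : msym s (p ^+ e) = msym s p ^+ e :> P.
Proof. by elim: e => [|e IH]; rewrite ?expr0 ?msym1 // !exprS msymM IH. Qed.

Definition Igen m d (g : P) := J_gens g \/ in_orb m (gen m d) g.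
Definition Iid m d := gen_ideal (Igen m d).

Lemma easy_dir m d f : (0 < d)%N -> (d <= m)%N -> (m <= n.+1)%N ->
  Iid m d f -> Jn (ellm m ^+ d * f).
Proof.
move=> d0 dm mn; apply: (@gi_min (Igen m d) (fun f => Jn (ellm m ^+ d * f))).
  split; first by rewrite mulr0; exact: J0.
    by move=> p q Hp Hq; rewrite mulrDr; apply: JD.
  by move=> r p Hp; rewrite mulrCA; apply: JM.
move=> g [[i ->]|[s [fs ->]]]; first by apply: JM; exact: JX2.
rewrite -(msym_ellm mn fs) -msymXn -msymM; apply: J_msym; exact: gen_ann.
Qed.


Lemma Iid_ideal m d : ideal_like (Iid m d).
Proof. exact: gi_ideal. Qed.

Lemma Iid_J m d f : Jn f -> Iid m d f.
Proof. by apply: gi_mono => g Hg; left. Qed.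

Lemma Iid_orb m d g : in_orb m (gen m d) g -> Iid m d g.
Proof. by move=> H; apply: giS; right. Qed.

Lemma IidD m d p q : Iid m d p -> Iid m d q -> Iid m d (p + q).
Proof. by case: (Iid_ideal m d) => _ H _; apply: H. Qed.
Lemma IidM m d r p : Iid m d p -> Iid m d (r * p).
Proof. by case: (Iid_ideal m d) => _ _ H; apply: H. Qed.
Lemma IidMr m d r p : Iid m d p -> Iid m d (p * r).
Proof. by move=> H; rewrite mulrC; apply: IidM. Qed.
Lemma IidN m d p : Iid m d p -> Iid m d (- p).
Proof. by apply: il_neg; exact: Iid_ideal. Qed.
Lemma IidB m d p q : Iid m d p -> Iid m d q -> Iid m d (p - q).
Proof. by apply: il_sub; exact: Iid_ideal. Qed.
Lemma Iid0 m d : Iid m d 0.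
Proof. by case: (Iid_ideal m d). Qed.
Lemma Iid_eqJ m d p q : eqJ p q -> Iid m d q -> Iid m d p.
Proof.
move=> H Hq; have -> : p = (p - q) + q by ring.
by apply: IidD => //; apply: Iid_J.
Qed.
Lemma Iid_sum m d (s : seq nat) (F : nat -> P) :
  (forall u, u \in s -> Iid m d (F u)) -> Iid m d (\sum_(u <- s) F u).
Proof.
elim: s => [|u s IH] H; first by rewrite big_nil; exact: Iid0.
rewrite big_cons; apply: IidD; first by apply: H; rewrite inE eqxx.
by apply: IH => v vs; apply: H; rewrite inE vs orbT.
Qed.

Lemma Iid_msym m d t f : fixes m t -> Iid m d f -> Iid m d (msym t f).
Proof.
move=> ft; apply: (@gi_min (Igen m d) (fun f => Iid m d (msym t f))).
  split; first by rewrite msym0; exact: Iid0.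
    by move=> p q Hp Hq; rewrite msymD; apply: IidD.
  by move=> r p Hp; rewrite msymM; apply: IidM.
move=> g [[i ->]|Ho].
  by apply: Iid_J; rewrite msymXn msymXU; exact: JX2.
by apply: Iid_orb; apply: orb_step.
Qed.

Lemma gen_shift M d : gen M d = gen M.+1 d.+1.
Proof. by rewrite /gen !addnS !addSn !subSS /= negbK. Qed.

Lemma Iid_shift M d f : Iid M d f -> Iid M.+1 d.+1 f.
Proof.
apply: gi_mono => g [Hg|[s [fs ->]]]; first by left.
by right; exists s; split; [exact: fixes_le fs | rewrite gen_shift].
Qed.

Lemma sum_diff (y : P) s : y *+ size s - L s = \sum_(u <- s) (y - var u).
Proof.
elim: s => [|u s IH]; first by rewrite /L !big_nil subrr.
by rewrite big_cons L_cons -IH /= mulrS; ring.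
Qed.

Lemma varM M : (M < n.+1)%N -> var M = 'X_(inord M).
Proof. exact: var_lt. Qed.


Lemma sv_tpL a b : (a < n.+1)%N -> (b < n.+1)%N -> sv (tp a b) a = b.
Proof. by move=> la lb; rewrite sv_tp // eqxx. Qed.
Lemma sv_tpR a b : (a < n.+1)%N -> (b < n.+1)%N -> sv (tp a b) b = a.
Proof. by move=> la lb; rewrite sv_tp // eqxx; case: eqP. Qed.
Lemma sv_tpD a b j : (a < n.+1)%N -> (b < n.+1)%N -> j <> a -> j <> b -> sv (tp a b) j = j.
Proof. by move=> la lb ja jb; rewrite sv_tp //; do 2 case: eqP => //. Qed.

Lemma pp_S p : pp p.+1 = pp p * (var (2 * p) - var (2 * p + 1)).
Proof. by rewrite /pair_prod big_ord_recr. Qed.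

Lemma K_odd M d : (M < n.+1)%N -> (0 < d)%N -> (d <= M)%N -> odd (M.+1 + d) ->
  Iid M.+1 d ((var M *+ d - ellm M) * pp ((M - d) %/ 2)).
Proof.
move=> Mn d0 dM Hodd.
have hm : ((M.+1 + d) %% 2 = 1)%N by rewrite modn2 Hodd.
set p := ((M - d) %/ 2)%N.
have hp : (2 * p = M - d)%N by rewrite /p; lia.
have H := pp_red (m := M) (p := p) ltac:(lia).
rewrite (_ : (M - 2 * p = d)%N) in H; last by lia.
apply: (@Iid_eqJ _ _ _ ((var M *+ d - L (iota (2 * p) d)) * pp p)).
  rewrite /eqJ; have -> : (var M *+ d - ellm M) * pp p - (var M *+ d - L (iota (2 * p) d)) * pp p
    = - (pp p * ellm M - pp p * L (iota (2 * p) d)) by rewrite /ellm; ring.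
  exact: JN.
have -> : var M *+ d = var M *+ size (iota (2 * p) d) by rewrite size_iota.
rewrite sum_diff mulr_suml; apply: Iid_sum => u.
rewrite mem_iota => /andP [u1 u2].
have -> : (var M - var u) * pp p = - (pp p * (var u - var M)) by ring.
apply: IidN; apply: Iid_orb.
have G : gen M.+1 d = pp p * (var (2 * p) - var (2 * p + 1)).
  rewrite /gen Hodd -pp_S; congr pp; lia.
rewrite G.
have f1 : fixes M.+1 (tp (2 * p + 1) M) by apply: fixes_tp; lia.
have O1 := orb_step (orb_refl M.+1 (gen M.+1 d)) f1.
rewrite G msymM msym_pp in O1; last by move=> j lj; apply: sv_tpD; lia.
rewrite msymB !msym_var sv_tpL ?sv_tpD in O1; try lia.
have f2 : fixes M.+1 (tp (2 * p) u) by apply: fixes_tp; lia.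
have O2 := orb_step O1 f2.
rewrite msymM msym_pp in O2; last by move=> j lj; apply: sv_tpD; lia.
rewrite msymB !msym_var sv_tpL ?(sv_tpD (j := M)) in O2; try lia.
exact: O2.
Qed.


Lemma K_even M d : (M < n.+1)%N -> (0 < d)%N -> (d.+1 <= M)%N -> ~~ odd (M.+1 + d) ->
  Iid M.+1 d ((var M *+ d - ellm M) * (var (M - d.+1) * pp ((M - d.+1) %/ 2))).
Proof.
move=> Mn d0 dM Hodd.
have hm : ((M.+1 + d) %% 2 = 0)%N by rewrite modn2 (negbTE Hodd).
set p := ((M - d.+1) %/ 2)%N.
have hp : (2 * p = M - d.+1)%N by rewrite /p; lia.
rewrite -hp.
have H := pp_red (m := M) (p := p) ltac:(lia).
rewrite (_ : (M - 2 * p = d.+1)%N) in H; last by lia.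
set Q := pp p in H *.
set w := (2 * p)%N in H *.
have Li : L (iota w d.+1) = var w + L (iota w.+1 d) by rewrite -L_cons.
apply: (@Iid_eqJ _ _ _ ((var M *+ d - L (iota w.+1 d)) * (var w * Q))).
  rewrite /eqJ; have -> : (var M *+ d - ellm M) * (var w * Q) - (var M *+ d - L (iota w.+1 d)) * (var w * Q)
    = - (var w * (Q * ellm M - Q * L (iota w d.+1))) - Q * var w ^+ 2 by rewrite Li /ellm; ring.
  apply: JB; [exact/JN/JM | apply: JM; exact: Jvar2].
have -> : var M *+ d = var M *+ size (iota w.+1 d) by rewrite size_iota.
rewrite sum_diff mulr_suml; apply: Iid_sum => u.
rewrite mem_iota => /andP [u1 u2].
have -> : (var M - var u) * (var w * Q) = var w * (Q * (var M - var u)) by ring.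
apply: Iid_orb.
have G : gen M.+1 d = var w.+2 * (Q * (var w - var (w + 1))).
  rewrite /gen (negbTE Hodd) /Q -pp_S; congr (var _ * pp _); rewrite /w; lia.
have f1 : fixes M.+1 (tp w.+2 w) by apply: fixes_tp; rewrite /w; lia.
have O1 := orb_step (orb_refl M.+1 (gen M.+1 d)) f1.
rewrite G !msymM msym_pp in O1; last by move=> j lj; apply: sv_tpD; rewrite /w; lia.
rewrite msymB !msym_var sv_tpL ?(@sv_tpR w.+2 w) ?sv_tpD in O1; try (rewrite /w; lia).
have f2 : fixes M.+1 (tp w.+2 M) by apply: fixes_tp; rewrite /w; lia.
have O2 := orb_step O1 f2.
rewrite !msymM msym_pp in O2; last by move=> j lj; apply: sv_tpD; rewrite /w; lia.
rewrite msymB !msym_var sv_tpL ?sv_tpD in O2; try (rewrite /w; lia).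
have f3 : fixes M.+1 (tp w.+1 u) by apply: fixes_tp; rewrite /w; lia.
have O3 := orb_step O2 f3.
rewrite !msymM msym_pp in O3; last by move=> j lj; apply: sv_tpD; rewrite /w; lia.
rewrite msymB !msym_var addn1 sv_tpL ?sv_tpD in O3; try (rewrite /w; lia).
by rewrite G addn1.
Qed.


Lemma K_top M : (M < n.+1)%N -> Iid M.+1 M.+1 (var M *+ M.+1 - ellm M).
Proof.
move=> Mn.
have G : gen M.+1 M.+1 = var 0 * pp 0.
  by rewrite /gen addnn odd_double subnn.
have Hv : forall u, (u <= M)%N -> Iid M.+1 M.+1 (var u).
  move=> u uM; have f1 : fixes M.+1 (tp 0 u) by apply: fixes_tp; lia.
  have O1 := orb_step (orb_refl M.+1 (gen M.+1 M.+1)) f1.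
  rewrite G msymM msym_pp in O1; last by move=> j; rewrite muln0.
  rewrite msym_var sv_tpL in O1; try lia.
  rewrite -G in O1; have := Iid_orb O1; by rewrite /pair_prod big_ord0 mulr1.
apply: IidB; first by rewrite -mulr_natr; apply: IidMr; apply: Hv.
rewrite /ellm /L; apply: Iid_sum => u; rewrite mem_iota => /andP [_ u2]; apply: Hv; lia.
Qed.


Lemma zxMn x p e : zx x (p *+ e) = zx x p *+ e.
Proof. by rewrite /zx comp_mpolyMn. Qed.

Lemma zx_var M u : (M < n.+1)%N -> u <> M -> zx (inord M) (var u) = var u.
Proof.
move=> Mn uM; case: (ltnP u n.+1) => lu; last by rewrite var_ge // zx0.
rewrite var_lt // zxX; case: eqP => // E; exfalso; apply: uM.
by rewrite -(inordK lu) -(inordK Mn) E.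
Qed.

Lemma zx_ellm M : (M < n.+1)%N -> zx (inord M) (ellm M) = ellm M.
Proof.
move=> Mn; rewrite /ellm /L (big_morph _ (zxD _) (zx0 _)); apply: eq_big_seq => u.
by rewrite mem_iota => /andP [_ lu]; apply: zx_var => //; lia.
Qed.

Lemma ellm_S M : ellm M.+1 = ellm M + var M.
Proof. by rewrite /ellm /L -(addn1 M) iotaD big_cat big_seq1 add0n. Qed.

Lemma transfer M d E F : (M < n.+1)%N -> (forall s, fixes M s -> msym s E = E) ->
  Iid M.+1 d (E * gen M d.+1) -> Iid M d.+1 F -> Iid M.+1 d (E * F).
Proof.
move=> Mn HE HK; apply: (@gi_min (Igen M d.+1) (fun h => Iid M.+1 d (E * h))).
  split; first by rewrite mulr0; exact: Iid0.
    by move=> p q Hp Hq; rewrite mulrDr; apply: IidD.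
  by move=> r p Hp; rewrite mulrCA; apply: IidM.
move=> g [[i ->]|[s [fs ->]]]; first by apply: Iid_J; apply: JM; exact: JX2.
rewrite -{1}(HE s fs) -msymM; apply: Iid_msym => //; exact: fixes_le fs.
Qed.

Lemma msym_E M d s : (M < n.+1)%N -> fixes M s -> msym s (var M *+ d - ellm M) = var M *+ d - ellm M.
Proof.
move=> Mn fs; rewrite msymB msymMn msym_var msym_ellm ?(ltnW Mn) //.
congr (var _ *+ _ - _); rewrite /sv Mn fs; [exact: inordK | by rewrite inordK].
Qed.


End Work.

Section Work2.
Variables (k : fieldType) (n : nat).
Local Notation P := {mpoly k[n.+1]}.
Local Notation Jn := (@J k n.+1).
Local Notation var := (@var k n.+1).
Local Notation pp := (@pair_prod k n.+1).
Local Notation ellm := (@ellm k n).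
Local Notation Iid := (@Iid k n).
Local Notation gen := (@gen k n).

Lemma hard (hk : [pchar k] =i pred0) m : (m <= n.+1)%N ->
  forall d f, (0 < d)%N -> (d <= m)%N -> Jn (ellm m ^+ d * f) -> Iid m d f.
Proof.
elim: m => [|M IH] mn d f d0 dm H; first by lia.
have Mn : (M < n.+1)%N by [].
set x : 'I_n.+1 := inord M.
have vx : var M = 'X_x by rewrite var_lt.
set a := zx x f; set b := zx x (dx x f).
have Ha : zx x a = a by rewrite /a zxK.
have Hb : zx x b = b by rewrite /b zxK.
have Hl : zx x (ellm M) = ellm M by rewrite /x zx_ellm.
have Hdec := decomp x f; rewrite -/a -/b in Hdec.
case: d d0 dm H => // d' _ dm H.
have [R HR] := expand (ellm M) ('X_x) d'.
set l := ellm M in HR Hl *.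
set q := l ^+ d'.+1 * b + l ^+ d' * a *+ d'.+1.
have H2 : Jn (l ^+ d'.+1 * a + 'X_x * q).
  rewrite ellm_S vx HR -/l in H.
  have -> : l ^+ d'.+1 * a + 'X_x * q =
    (l ^+ d'.+1 + 'X_x * l ^+ d' *+ d'.+1 + 'X_x ^+ 2 * R) * f
    - (l ^+ d'.+1 + 'X_x * l ^+ d' *+ d'.+1 + 'X_x ^+ 2 * R) * (f - (a + 'X_x * b))
    - 'X_x ^+ 2 * (l ^+ d' * b *+ d'.+1 + R * (a + 'X_x * b)) by rewrite /q; ring.
  apply: JB; first apply: JB => //; first exact: JM.
  by apply: JMr; exact: JX2.
have [Jp Jq] : Jn (l ^+ d'.+1 * a) /\ Jn q.
  apply: (split_J (x := x)) => //.
    by rewrite zxM zxXn Hl Ha.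
  by rewrite /q zxD !zxM !zxMn !zxM !zxXn Hl Ha Hb.
set c := l * b + a *+ d'.+1.
have Hc : Iid M.+1 d'.+1 c.
  have Eq : q = l ^+ d' * c by rewrite /q /c mulrDr exprSr -mulrA mulrnAr.
  rewrite Eq in Jq.
  case: (posnP d') => [d0'|dpos].
    by apply: Iid_J; move: Jq; rewrite d0' expr0 mul1r.
  have -> : d'.+1 = d'.-1.+2 by lia.
  apply: Iid_shift; rewrite (_ : d'.-1.+1 = d'); last by lia.
  by apply: IH; [exact: ltnW | lia | lia | exact: Jq].
have Hb2 : Iid M.+1 d'.+1 ((var M *+ d'.+1 - ellm M) * b).
  case: (leqP d'.+2 M) => dM.
    have Hbb : Iid M d'.+2 b.
      apply: IH => //; first exact: ltnW.
      have -> : ellm M ^+ d'.+2 * b = l * q - (l ^+ d'.+1 * a) *+ d'.+1 by rewrite /q mulrDr mulrnAr !mulrA -!exprS addrK.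
      by apply: JB; [exact: JM | rewrite -mulr_natr; exact: JMr].
    apply: transfer => //; first by move=> s fs; exact: msym_E.
    case: (boolP (odd (M.+1 + d'.+1))) => Ho.
      have := K_odd k Mn (isT : (0 < d'.+1)%N) (ltnW dM) Ho.
      rewrite /gen addnS -addSn Ho; congr (Iid _ _ (_ * pp _)); lia.
    have := K_even k Mn (isT : (0 < d'.+1)%N) dM Ho.
    by rewrite /gen addnS -addSn (negbTE Ho).
  case: (eqVneq d' M) => [Ed|Nd].
    rewrite Ed; apply: IidMr; exact: K_top.
  have Ed : d'.+1 = M by lia.
  have Ho : odd (M.+1 + d'.+1) by rewrite Ed addSn /= addnn odd_double.
  have := K_odd k Mn (isT : (0 < d'.+1)%N) (eq_leq Ed) Ho.
  rewrite Ed subnn div0n /pair_prod big_ord0 mulr1 => HH.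
  rewrite -Ed; apply: IidMr; by rewrite Ed.
have Hf : Iid M.+1 d'.+1 (f *+ d'.+1).
  have -> : f *+ d'.+1 = (f - (a + 'X_x * b)) *+ d'.+1 + c + (var M *+ d'.+1 - ellm M) * b.
    by rewrite /c vx -/l; ring.
  apply: IidD => //; apply: IidD => //; apply: Iid_J.
  by rewrite -mulr_natr; exact: JMr.
have nz : (d'.+1%:R : k) != 0 by rewrite (pcharf0P k).1.
have -> : f = ((d'.+1%:R)^-1)%:MP * (f *+ d'.+1).
  by rewrite mul_mpolyC -scaler_nat scalerA mulVf // scale1r.
exact: IidM.
Qed.

End Work2.

Unset Implicit Arguments.

Theorem mainTheorem6 (k : fieldType) (n d : nat) :
  [pchar k] =i pred0 ->
  (0 < d)%N -> (d <= n)%N ->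
  (forall f : {mpoly k[n]},
     colon (@J k n) (ell k n ^+ d) f <->
     J_plus_sym
       (if odd (n + d) then pair_prod k n ((n - d + 1) %/ 2)
        else var k n (n - d) * pair_prod k n ((n - d) %/ 2)) f).
Proof.
case: n => [|n] hk d0 dn; first by lia.
have G : (if odd (n.+1 + d) then pair_prod k n.+1 ((n.+1 - d + 1) %/ 2)
        else var k n.+1 (n.+1 - d) * pair_prod k n.+1 ((n.+1 - d) %/ 2)) = gen k n n.+1 d by [].
rewrite G.
have E : ell k n.+1 = ellm k n n.+1.
  rewrite ellmE //; apply: eq_bigl => i; by rewrite ltn_ord.
have S1 : forall f, J_plus_sym (gen k n n.+1 d) f <-> @Iid k n n.+1 d f.
  move=> f; split; apply: gi_mono => g [Hg|Hg]; (try by left); right.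
    by case: Hg => s ->; exists s; split => // i li; exfalso; move: (ltn_ord i); rewrite ltnNge li.
  by case: Hg => s [_ ->]; exists s.
move=> f; rewrite S1 /colon E mulrC; split.
  exact: hard.
exact: easy_dir.
Qed.
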